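(* If $(X,\Pi)$ is a finite strictly quasiconvex quasisupermodular aggregative game for which a fESS exists, then imitation is not subject to a money pump.
   Context: An aggregative game $(X,\Pi)$ consists of: a totally ordered action set $X$ (finite here) and a totally ordered set $Z$; a symmetric aggregator $a:X\times X\to Z$ ($a(x,y)=a(y,x)$) that is monotone increasing (if $x''\ge x'$, $y''\ge y'$ and $(x'',y'')\neq(x',y')$ then $a(x'',y'')>a(x',y')$); and $\Pi:X\times Z\to\mathbb{R}$, with underlying symmetric two-player game payoff $\pi(x,y)=\Pi(x,a(x,y))$. Quasisupermodular: for all $z''>z'$ and $x''>x'$, $\Pi(x'',z')-\Pi(x',z')\ge0\Rightarrow\Pi(x'',z'')-\Pi(x',z'')\ge0$ and the same with $>0$ in both places. Strictly quasiconvex: for all $x<x'<x''$ and $z$, $\Pi(x',z)<\max\{\Pi(x,z),\Pi(x'',z)\}$. fESS: $x^*$ with $\Pi(x^*,a(x^*,x))\ge\Pi(x,a(x^*,x))$ for all $x\in X$. Relative payoff: $\Delta(x,y)=\pi(x,y)-\pi(y,x)$. Imitate-the-best: given initial $y_0\in X$ and any opponent sequence $(x_t)_{t\ge0}$, $y_t=x_{t-1}$ if $\Delta(x_{t-1},y_{t-1})>0$ and $y_t=y_{t-1}$ otherwise. Imitation is not subject to a money pump if there is $M\in\mathbb{R}_+$ such that for every $y_0\in X$ and every sequence $(x_t)$, $\limsup_{T\to\infty}\sum_{t=0}^T\Delta(x_t,y_t)\le M$. *)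

(* Defs.v *)
From HB Require Import structures.
From mathcomp Require Import all_boot all_order all_algebra.
From mathcomp Require Import all_classical all_reals all_analysis.
Set Implicit Arguments. Unset Strict Implicit. Unset Printing Implicit Defensive.
Import Order.TTheory GRing.Theory Num.Theory.

Section AggGame.
Context {d dz : Order.disp_t} (X : finOrderType d) (Z : orderType dz) (R : realType).
Local Open Scope ring_scope.

Definition agg_symmetric (a : X -> X -> Z) : Prop := forall x y, a x y = a y x.

Definition agg_monotone (a : X -> X -> Z) : Prop :=
  forall x' x'' y' y'' : X, (x' <= x'')%O -> (y' <= y'')%O ->
    (x'', y'') <> (x', y') -> (a x' y' < a x'' y'')%O.

Definition aggregator (a : X -> X -> Z) : Prop := agg_symmetric a /\ agg_monotone a.

Definition pi_of (Pi : X -> Z -> R) (a : X -> X -> Z) (x y : X) : R := Pi x (a x y).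

Definition quasisupermodular (Pi : X -> Z -> R) : Prop :=
  forall (z' z'' : Z) (x' x'' : X), (z' < z'')%O -> (x' < x'')%O ->
    (0 <= Pi x'' z' - Pi x' z' -> 0 <= Pi x'' z'' - Pi x' z'') /\
    (0 < Pi x'' z' - Pi x' z' -> 0 < Pi x'' z'' - Pi x' z'').

Definition strictly_quasiconvex (Pi : X -> Z -> R) : Prop :=
  forall (x x' x'' : X) (z : Z), (x < x')%O -> (x' < x'')%O ->
    Pi x' z < Num.max (Pi x z) (Pi x'' z).

Definition fESS (Pi : X -> Z -> R) (a : X -> X -> Z) (xs : X) : Prop :=
  forall x : X, Pi x (a xs x) <= Pi xs (a xs x).

Definition Delta (Pi : X -> Z -> R) (a : X -> X -> Z) (x y : X) : R :=
  pi_of Pi a x y - pi_of Pi a y x.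

Fixpoint imitate (Pi : X -> Z -> R) (a : X -> X -> Z) (y0 : X) (xs : nat -> X)
    (t : nat) : X :=
  match t with
  | 0 => y0
  | t'.+1 => let y := imitate Pi a y0 xs t' in
             if 0 < Delta Pi a (xs t') y then xs t' else y
  end.

Definition no_money_pump (Pi : X -> Z -> R) (a : X -> X -> Z) : Prop :=
  exists M : R, 0 <= M /\
    forall (y0 : X) (xs : nat -> X),
      (limn_esup (fun T : nat =>
         (\sum_(0 <= t < T.+1) Delta Pi a (xs t) (imitate Pi a y0 xs t))%:E)
       <= M%:E)%E.

End AggGame.

(* Main.v *)
Require Import Defs.
From HB Require Import structures.
From mathcomp Require Import all_boot all_order all_algebra.
From mathcomp Require Import all_classical all_reals all_analysis.
From mathcomp Require Import lra.
Import Order.TTheory GRing.Theory Num.Theory.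

Local Open Scope ring_scope.

Lemma unbeaten (d dz : Order.disp_t) (X : finOrderType d) (Z : orderType dz)
  (R : realType) (a : X -> X -> Z) (Pi : X -> Z -> R) (S : {set X}) :
  aggregator a -> strictly_quasiconvex Pi -> quasisupermodular Pi ->
  (0 < #|S|)%N -> exists2 m, m \in S & forall z, z \in S -> Delta Pi a z m <= 0.
Proof.
move=> [asym amon] sqc qsm /card_gt0P [i0 Hi0].
case: (@arg_minP _ X X i0 (fun i => i \in S) id Hi0) => n nS nmin.
case: (@arg_maxP _ X X i0 (fun i => i \in S) id Hi0) => m mS mmax.
have mid : forall z, z \in S -> z != n -> z != m -> (n < z)%O /\ (z < m)%O.
  move=> z zS zn zm; split.
    by rewrite lt_neqAle eq_sym zn /=; exact: (nmin z zS).
  by rewrite lt_neqAle zm /=; exact: (mmax z zS).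
rewrite /Delta /Defs.pi_of.
case: (lerP 0 (Pi m (a m n) - Pi n (a n m))) => hmn.
- exists m => // z zS.
  have [->|zm] := eqVneq z m; first by rewrite subrr.
  have [->|zn] := eqVneq z n; first by rewrite -opprB oppr_le0.
  have [nz zm'] := mid z zS zn zm.
  have h1 : (a n m < a z m)%O.
    apply: amon => //; [exact: ltW | by case=> E; move: zn; rewrite E eqxx].
  have nm : (n < m)%O := lt_trans nz zm'.
  have [qa _] := qsm _ _ _ _ h1 nm.
  have h2 : 0 <= Pi m (a z m) - Pi n (a z m) by apply: qa; move: hmn; rewrite (asym m n).
  have h3 := sqc _ _ _ (a z m) nz zm'.
  rewrite /Defs.pi_of (asym m z).
  move: h3; rewrite (_ : Num.max _ _ = Pi m (a z m)); first by lra.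
  by apply/max_idPr; lra.
- exists n => // z zS.
  have [->|zn] := eqVneq z n; first by rewrite subrr.
  have [->|zm] := eqVneq z m; first by lra.
  have [nz zm'] := mid z zS zn zm.
  have h1 : (a n z < a n m)%O.
    apply: amon => //; [exact: ltW | by case=> E; move: zm; rewrite E eqxx].
  have nm : (n < m)%O := lt_trans nz zm'.
  have [_ qb] := qsm _ _ _ _ h1 nm.
  have h2 : Pi m (a n z) <= Pi n (a n z).
    rewrite leNgt; apply/negP => H.
    have H' : 0 < Pi m (a n z) - Pi n (a n z) by lra.
    have := qb H'; move: hmn; rewrite (asym m n); lra.
  have h3 := sqc _ _ _ (a n z) nz zm'.
  rewrite /Defs.pi_of (asym z n).
  move: h3; rewrite (_ : Num.max _ _ = Pi n (a n z)); first by lra.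
  by apply/max_idPl.
Qed.

Lemma rank_exists (d dz : Order.disp_t) (X : finOrderType d) (Z : orderType dz)
  (R : realType) (a : X -> X -> Z) (Pi : X -> Z -> R) :
  aggregator a -> strictly_quasiconvex Pi -> quasisupermodular Pi ->
  forall k (S : {set X}), #|S| = k -> exists r : X -> nat,
    (forall z, (r z <= k)%N) /\
    forall x y, x \in S -> y \in S -> 0 < Delta Pi a x y -> (r y < r x)%N.
Proof.
move=> ag sqc qsm; elim=> [|k IH] S cS.
  exists (fun=> 0%N); split => // x y xS.
  have : (0 < #|S|)%N by apply/card_gt0P; exists x.
  by rewrite cS.
have Sn : (0 < #|S|)%N by rewrite cS.
have [m mS mun] := @unbeaten _ _ _ _ _ _ _ _ ag sqc qsm Sn.
have cS' : #|S :\ m| = k by move: cS; rewrite (cardsD1 m) mS add1n => [[]].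
have [r' [r'b r'd]] := IH _ cS'.
exists (fun z => if z == m then k.+1 else r' z); split.
  by move=> z; case: ifP => // _; apply: leqW.
move=> x y xS yS hxy.
have [ym|ym] := eqVneq y m.
  by have := mun x xS; rewrite -ym; lra.
have [xm|xm] := eqVneq x m; first by rewrite ltnS.
by apply: r'd => //; rewrite !inE ?xm ?ym.
Qed.

Theorem proposition7 (d dz : Order.disp_t) (X : finOrderType d) (Z : orderType dz)
  (R : realType) (a : X -> X -> Z) (Pi : X -> Z -> R) :
  aggregator a ->
  strictly_quasiconvex Pi ->
  quasisupermodular Pi ->
  (exists xs : X, fESS Pi a xs) ->
  no_money_pump Pi a.
Proof.
move=> ag sqc qsm _.
pose S0 := finset (fun _ : X => true).
have [r [rb rd]] := @rank_exists _ _ _ _ _ _ _ ag sqc qsm #|S0| S0 (erefl _).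
set B := \sum_(p : X * X) `|Delta Pi a p.1 p.2|.
have B0 : 0 <= B by apply: sumr_ge0 => p _.
have DB : forall x y, Delta Pi a x y <= B.
  move=> x y; apply: le_trans (ler_norm _) _.
  rewrite /B (bigD1 (x, y)) //=; rewrite lerDl; exact: sumr_ge0.
exists (B * (#|S0|)%:R); split; first by apply: mulr_ge0.
move=> y0 xs.
set y := imitate Pi a y0 xs.
have claim : forall T, \sum_(0 <= t < T) Delta Pi a (xs t) (y t) <=
    B * (r (y T))%:R - B * (r y0)%:R.
  elim=> [|T IH]; first by rewrite big_geq // /y /= subrr.
  rewrite big_nat_recr //=.
  have -> : y T.+1 = (if 0 < Delta Pi a (xs T) (y T) then xs T else y T) by [].
  move: IH; set yT := y T => IH.
  case: ifP => h.
  - have hr : (r yT < r (xs T))%N by apply: rd; rewrite ?inE.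
    have h3 : B * (r yT)%:R + B <= B * (r (xs T))%:R.
      rewrite -[X in _ + X]mulr1 -mulrDr; apply: ler_wpM2l => //.
      by rewrite -[1]/(1%:R) -natrD ler_nat addn1.
    have := DB (xs T) yT; lra.
  - have h' : Delta Pi a (xs T) yT <= 0 by rewrite leNgt h.
    lra.
have bound : forall T, ((\sum_(0 <= t < T.+1) Delta Pi a (xs t) (y t))%:E
    <= (B * (#|S0|)%:R)%:E)%E.
  move=> T; rewrite lee_fin; apply: le_trans (claim T.+1) _.
  have : B * (r (y T.+1))%:R <= B * (#|S0|)%:R.
    by apply: ler_wpM2l => //; rewrite ler_nat.
  have : 0 <= B * (r y0)%:R by apply: mulr_ge0.
  lra.
rewrite limn_esup_lim.
rewrite (cvg_lim _ (@cvg_esups_inf R _)) //.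
apply: le_trans (ereal_inf_lbound _) _; first by exists 0%N.
apply: ge_ereal_sup => _ [k _ <-]; exact: bound.
Qed.
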